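(* Let $t>0$ and let $G$ be a graph containing neither $K_t$ nor $K_{t,t}$ as an induced subgraph. Then $\operatorname{tw}(G)\le 3(R(t,t)-1)\,2^{\operatorname{rw}(G)+1}-1$.
   Context: All graphs are finite and simple. $\operatorname{tw}$ denotes treewidth and $\operatorname{rw}$ denotes rank-width (in the sense of Oum and Seymour). $R(t,t)$ is the Ramsey number: every graph on at least $R(t,t)$ vertices contains a clique or a stable set of size $t$. *)

(* Defs.v *)
(* Finite simple graphs are symmetric irreflexive relations
   on a finType. *)
From mathcomp Require Import all_boot all_order all_algebra.
Set Implicit Arguments. Unset Strict Implicit. Unset Printing Implicit Defensive.
Import GRing.Theory.
Local Open Scope nat_scope.

Section Graphs.
Variable T : finType.
Variable e : rel T.

Definition is_clique (S : {set T}) : Prop :=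
  forall x y, x \in S -> y \in S -> x != y -> e x y.

Definition is_stable (S : {set T}) : Prop :=
  forall x y, x \in S -> y \in S -> ~~ e x y.

Definition has_induced_Kt (t : nat) : Prop :=
  exists S : {set T}, #|S| = t /\ is_clique S.

Definition has_induced_Ktt (t : nat) : Prop :=
  exists A B : {set T}, [/\ [disjoint A & B], #|A| = t, #|B| = t,
    is_stable A /\ is_stable B & forall a b, a \in A -> b \in B -> e a b].

End Graphs.

Definition acyclic (I : finType) (f : rel I) : Prop :=
  forall s : seq I, uniq s -> 3 <= size s -> ~~ cycle f s.

Definition is_tree (I : finType) (f : rel I) : Prop :=
  [/\ 0 < #|I|, symmetric f, irreflexive f,
      (forall i j, connect f i j) & acyclic f].

Definition degree (I : finType) (f : rel I) (i : I) : nat := #|[set j | f i j]|.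

Definition is_tree_decomposition (T : finType) (e : rel T)
  (I : finType) (f : rel I) (B : I -> {set T}) : Prop :=
  [/\ is_tree f,
      (forall v, exists i, v \in B i),
      (forall u v, e u v -> exists i, (u \in B i) && (v \in B i)) &
      (forall v i j, v \in B i -> v \in B j ->
          connect [rel x y | [&& f x y, v \in B x & v \in B y]] i j)].

Definition tw_le (T : finType) (e : rel T) (k : nat) : Prop :=
  exists (I : finType) (f : rel I) (B : I -> {set T}),
    is_tree_decomposition e f B /\ forall i, #|B i| <= k.+1.

Definition treewidth_is (T : finType) (e : rel T) (k : nat) : Prop :=
  tw_le e k /\ forall k', tw_le e k' -> k <= k'.

Definition cutrank (T : finType) (e : rel T) (X : {set T}) : nat :=
  \rank (\matrix_(a < #|X|, b < #|~: X|)
           ((e (enum_val a) (enum_val b))%:R : 'F_2))%R.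

Definition is_rank_decomposition (T : finType)
  (I : finType) (f : rel I) (L : T -> I) : Prop :=
  [/\ is_tree f, (forall i, degree f i <= 3), injective L,
      (forall v, degree f (L v) = 1) &
      (forall i, degree f i = 1 -> exists v, L v = i)].

Definition edge_side (T : finType) (I : finType) (f : rel I) (L : T -> I)
  (i j : I) : {set T} :=
  [set v | connect [rel x y | f x y && ~~ (((x == i) && (y == j)) ||
                                         ((x == j) && (y == i)))] i (L v)].

(* G has rank-width at most k (graphs on at most one vertex have rank-width 0) *)
Definition rw_le (T : finType) (e : rel T) (k : nat) : Prop :=
  #|T| <= 1 \/
  exists (I : finType) (f : rel I) (L : T -> I),
    is_rank_decomposition f L /\
    forall i j, f i j -> cutrank e (edge_side f L i j) <= k.

Definition rankwidth_is (T : finType) (e : rel T) (k : nat) : Prop :=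
  rw_le e k /\ forall k', rw_le e k' -> k <= k'.

Definition ramsey_prop (t n : nat) : Prop :=
  forall (U : finType) (r : rel U), symmetric r -> irreflexive r ->
    n <= #|U| -> exists S : {set U}, #|S| = t /\ (is_clique r S \/ is_stable r S).

Definition ramsey_number_is (t n : nat) : Prop :=
  ramsey_prop t n /\ forall m, ramsey_prop t m -> n <= m.

(* Main.v *)
Require Import Defs.
From mathcomp Require Import all_boot all_order all_algebra zify.
Set Implicit Arguments. Unset Strict Implicit. Unset Printing Implicit Defensive.

Section Tree.
Variables (I : finType) (f : rel I).
Hypotheses (fsym : symmetric f) (firr : irreflexive f) (facyc : acyclic f).

Definition frem (a b : I) := [rel x y | f x y && ~~ (((x == a) && (y == b)) ||
                                         ((x == b) && (y == a)))].
Definition ns a b x := connect (frem a b) a x.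

Lemma rem_sym a b : symmetric (frem a b).
Proof.
move=> x y /=; rewrite fsym; congr (_ && ~~ _).
by case: (x == a); case: (y == b); case: (x == b); case: (y == a).
Qed.

Lemma remC a b : frem a b =2 frem b a.
Proof. by move=> x y /=; rewrite orbC. Qed.

Lemma rem_connect_sym a b : connect_sym (frem a b).
Proof. exact: sym_connect_sym (@rem_sym a b). Qed.

Lemma ACYC a b : f a b -> ~~ connect (frem a b) a b.
Proof.
move=> fab; apply/negP => /connectP [p pp lp].
move: lp; case: (shortenP pp) => p' pp' up' _ lp'.
have fsub : subrel (frem a b) f by move=> x y /andP[].
have := facyc up'.
case: p' pp' up' lp' => [|c p'] /=.
  by move=> _ _ ab; move: fab; rewrite ab firr.
case: p' => [|d p'] /=.
  by rewrite andbT => /andP[_ /negP nab] _ bc; case: nab; rewrite -bc !eqxx.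
move=> /andP[rac /andP[rcd pp']] _ lp'; rewrite ltnS ltnS ltnS leq0n => /(_ isT).
rewrite /= rcons_path /= (fsub _ _ rac) (fsub _ _ rcd) (sub_path fsub pp') /=.
by rewrite -lp' fsym fab.
Qed.

Lemma DISJ a b x : f a b -> ns a b x -> ns b a x -> False.
Proof.
move=> fab h1 h2; apply: (negP (ACYC fab)).
apply: (connect_trans h1); rewrite rem_connect_sym.
by rewrite /ns (eq_connect (@remC b a)) in h2.
Qed.


Lemma sorted_rev s : sorted f (rev s) = sorted f s.
Proof. by rewrite rev_sorted; apply: eq_sorted => x y; rewrite fsym. Qed.

Lemma path_rem a b x s : path f x s -> (a \notin x :: s) || (b \notin x :: s) ->
  path (frem a b) x s.
Proof.
elim: s x => [//|y s IH] x /= /andP[fxy ps] H.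
have hx z : z \notin x :: y :: s -> (z != x) && (z != y) && (z \notin y :: s).
  by rewrite !inE !negb_or => /andP[-> /andP[-> ->]].
rewrite IH //; last first.
  by case/orP: H => /hx /andP[_ ->]; rewrite ?orbT.
rewrite fxy /= andbT.
case/orP: H => /hx /andP[/andP[h1 h2] _]; apply/negP => /orP[] /andP[/eqP ex /eqP ey];
  subst; by rewrite ?eqxx in h1 h2.
Qed.

Lemma CONS q1 a b q2 : sorted f (q1 ++ a :: b :: q2) -> uniq (q1 ++ a :: b :: q2) ->
  (forall y, y \in rcons q1 a -> ns a b y) /\ (forall y, y \in b :: q2 -> ns b a y).
Proof.
rewrite -cat_rcons => hs; rewrite cat_uniq => /and3P[_ hh _].
have [s1 s2] := cat_sorted2 hs.
have hb : b \notin rcons q1 a by apply: contra hh => hb; rewrite /= hb.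
have ha : a \notin b :: q2.
  by apply: contra hh => ha; apply/hasP; exists a => //; rewrite mem_rcons mem_head.
split.
  have : sorted f (a :: rev q1) by rewrite -rev_rcons sorted_rev.
  move=> /= pr y.
  have hy' : y \in rcons q1 a -> y \in a :: rev q1 by rewrite mem_rcons !inE mem_rev.
  move=> /hy' hy.
  apply: (path_connect (path_rem (a:=a) (b:=b) pr _) hy).
  by apply/orP; right; rewrite -rev_rcons mem_rev.
move=> y hy; rewrite /ns (eq_connect (@remC b a)).
have pr : path (frem a b) b q2 by apply: path_rem s2 _; rewrite ha.
exact: (path_connect pr hy).
Qed.


Lemma PATHSEP a b x0 s : f a b -> path f x0 s -> ns a b x0 -> ns b a (last x0 s) ->
  exists q1 q2, x0 :: s = q1 ++ a :: b :: q2.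
Proof.
move=> fab; elim: s x0 => [|y s IH] x0 /=.
  by move=> _ h1 h2; case: (DISJ fab h1 h2).
move=> /andP[fxy ps] h1 h2.
case E1: ((x0 == a) && (y == b)).
  by case/andP: E1 => /eqP -> /eqP ->; exists [::], s.
case E2: ((x0 == b) && (y == a)).
  case/andP: E2 => /eqP ex _; subst x0.
  by case: (negP (ACYC fab)).
have h1' : ns a b y.
  apply: (connect_trans h1); apply: connect1; by rewrite /= fxy E1 E2.
have [q1 [q2 E]] := IH y ps h1' h2.
by exists (x0 :: q1), q2; rewrite E.
Qed.

End Tree.

Lemma cons_dec (T : eqType) (x : T) s q1 a b q2 :
  x :: s = q1 ++ a :: b :: q2 ->
  (q1 = [::] /\ x = a /\ s = b :: q2) \/
  (exists q1', q1 = x :: q1' /\ s = q1' ++ a :: b :: q2).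
Proof.
case: q1 => [|z q1] /= [-> ->]; first by left.
by right; exists q1.
Qed.

Lemma FIRST (T : eqType) (P : rel T) x0 s :
  (forall q1 a b q2, x0 :: s = q1 ++ a :: b :: q2 -> P a b) \/
  exists q1 a b q2, [/\ x0 :: s = q1 ++ a :: b :: q2, ~~ P a b &
     forall r1 c d r2, rcons q1 a = r1 ++ c :: d :: r2 -> P c d].
Proof.
elim: s x0 => [|y s IH] x0.
  by left => q1 a b q2 /cons_dec [[_ [_ //]] | [q1' [_]]]; case: q1'.
case Pxy : (P x0 y); last first.
  right; exists [::], x0, y, s; split => //; first by rewrite Pxy.
  by move=> [|z [|w r1]] c d r2 //=.
case: (IH y) => [H | [q1 [a [b [q2 [E nP H]]]]]].
  left => q1 a b q2 /cons_dec [[_ [<- E]] | [q1' [_ E]]].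
    by case: E => <- _.
  exact: (H _ _ _ _ E).
right; exists (x0 :: q1), a, b, q2; split; first by rewrite E.
  done.
move=> r1 c d r2 /= /cons_dec [[_ [<- E']] | [r1' [_ E']]]; last exact: H E'.
case/cons_dec: E => [[Eq [Ey _]] | [q1' [Eq _]]]; subst q1; case: E' => <- _ //.
by rewrite -Ey.
Qed.


Lemma path_prefix (T : eqType) (r : rel T) x s q1 y q2 : path r x s ->
  x :: s = q1 ++ y :: q2 -> exists s', [/\ path r x s', last x s' = y & x :: s' = rcons q1 y].
Proof.
case: q1 => [|z q1] /=.
  by move=> _ [-> _]; exists [::].
move=> ps [ex es]; rewrite es in ps; rewrite -ex.
exists (rcons q1 y); split => //; last by rewrite last_rcons.
by move: ps; rewrite -cat_rcons cat_path => /andP[].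
Qed.

Lemma last_in (T : eqType) (x : T) s r1 a b r2 : x :: s = r1 ++ a :: b :: r2 ->
  last x s \in b :: r2.
Proof.
move=> E; have -> : last x s = last x (x :: s) by [].
by rewrite E last_cat /= mem_last.
Qed.

Lemma head_in (T : eqType) (x : T) s r d r' : x :: s = r ++ d :: r' -> x \in rcons r d.
Proof. by case: r => [|z r] /= [->]; rewrite ?mem_head // mem_rcons !inE eqxx orbT. Qed.

Lemma second_in (T : eqType) (x : T) s r d c r' : x :: s = r ++ d :: c :: r' -> c \in s.
Proof.
case: r => [|z r] /= [_ ->]; first by rewrite mem_head.
by rewrite mem_cat !inE eqxx !orbT.
Qed.

Lemma pair_rel (T : eqType) (r : rel T) q1 a b q2 : sorted r (q1 ++ a :: b :: q2) -> r a b.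
Proof. by move/cat_sorted2 => [_] /= /andP[]. Qed.

Lemma SPLIT (T : finType) (r : rel T) c d x s : path r x s ->
  connect (frem r c d) x (last x s) \/
  (exists2 z, (z == c) || (z == d) & connect r x z /\ connect (frem r c d) z (last x s)).
Proof.
elim: s x => [|y s IH] x /=; first by left.
move=> /andP[rxy ps]; case: (IH y ps) => [H | [z hz [h1 h2]]].
  case E: (((x == c) && (y == d)) || ((x == d) && (y == c))).
    right; exists y; last by split => //; apply: connect1.
    by case/orP: E => /andP[_ ->]; rewrite ?orbT.
  left; apply: connect_trans H; apply: connect1; by rewrite /= rxy E.
right; exists z => //; split => //; apply: connect_trans h1; exact: connect1.
Qed.

Section Count.
Variables (T : finType) (e : rel T) (R : nat).

Lemma count_X (S : {set T}) :
  #|[set u in S | #|[set x in S | [forall y, (y \notin S) ==> (e x y == e u y)]]| < R]|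
  <= 2 ^ cutrank e S * (R - 1).
Proof.
set Xs := [set u in S | _].
pose M := (\matrix_(a < #|S|, b < #|~: S|) ((e (enum_val a) (enum_val b))%:R : 'F_2))%R.
pose rho (x : T) : 'rV['F_2]_#|~: S| := (\row_b ((e x (enum_val b))%:R : 'F_2))%R.
have rhoE x y : rho x = rho y -> forall z, z \notin S -> e x z = e y z.
  move=> E z hz; have hz' : z \in ~: S by rewrite inE.
  have := congr1 (fun r : 'rV_ _ => r 0 (enum_rank_in hz' z))%R E.
  rewrite !mxE enum_rankK_in //.
  by case: (e x z); case: (e y z).
have himg : #|rho @: S| <= 2 ^ cutrank e S.
  pose B := row_base M.
  have sub : rho @: S \subset [set (D *m B)%R | D : 'rV['F_2]_(\rank M)].
    apply/subsetP => w /imsetP [x hx ->].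
    have Ex : rho x = row (enum_rank_in hx x) M.
      by apply/rowP => b; rewrite !mxE enum_rankK_in.
    have : (row (enum_rank_in hx x) M <= B)%MS by rewrite eq_row_base row_sub.
    case/submxP => D hD; apply/imsetP; exists D => //; by rewrite Ex hD.
  apply: (leq_trans (subset_leq_card sub)); apply: (leq_trans (leq_imset_card _ _)).
  by rewrite card_mx card_Fp // mul1n.
have hXS : Xs \subset S by apply/subsetP => x; rewrite inE => /andP[].
apply: (@leq_trans (#|rho @: Xs| * (R - 1))); last first.
  apply: leq_mul => //; apply: leq_trans himg; apply: subset_leq_card; exact: imsetS.
rewrite -sum1_card (partition_big_imset rho) /= -sum_nat_const.
apply: leq_sum => w /imsetP [x0 hx0 ->].
rewrite sum1dep_card.
move: (hx0); rewrite inE => /andP[hx0S hC].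
apply: (@leq_trans #|[set x in S | [forall y, (y \notin S) ==> (e x y == e x0 y)]]|).
  apply: subset_leq_card; apply/subsetP => x; rewrite !inE => /andP[/andP[hxS _] /eqP hr].
  rewrite hxS /=; apply/forallP => y; apply/implyP => hy; apply/eqP; exact: rhoE.
by move: hC; case: (R) => // n; rewrite subn1 ltnS.
Qed.

End Count.

Section Main.
Variables (T : finType) (e : rel T) (esym : symmetric e) (eirr : irreflexive e) (t R : nat).
Hypotheses (noKt : ~ has_induced_Kt e t) (noKtt : ~ has_induced_Ktt e t)
  (hram : ramsey_prop t R).
Variables (I : finType) (f : rel I) (L : T -> I).
Hypotheses (fsym : symmetric f) (firr : irreflexive f) (facyc : acyclic f) (Linj : injective L).

Definition A a b := edge_side f L a b.
Lemma inA v a b : (v \in A a b) = ns f a b (L v).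
Proof. by rewrite inE. Qed.

Definition C a b u := [set x in A a b | [forall y, (y \notin A a b) ==> (e x y == e u y)]].
Definition X a b := [set u in A a b | #|C a b u| < R].

Lemma stable_sub (S : {set T}) : R <= #|S| ->
  exists S' : {set T}, [/\ S' \subset S, #|S'| = t & is_stable e S'].
Proof.
move=> hS.
pose U : finType := {x : T | x \in S}.
pose r := [rel x y : U | e (val x) (val y)].
have rsym : symmetric r by move=> x y /=; rewrite esym.
have rirr : irreflexive r by move=> x /=; rewrite eirr.
have hU : R <= #|U| by rewrite card_sig.
have [S0 [cS0 hS0]] := hram rsym rirr hU.
exists (val @: S0); split.
- by apply/subsetP => x /imsetP [y _ ->]; exact: (valP y).
- by rewrite card_imset //; exact: val_inj.
case: hS0 => [hcl | hst].
  exfalso; apply: noKt; exists (val @: S0); split.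
    by rewrite card_imset //; exact: val_inj.
  move=> x y /imsetP [x' hx' ->] /imsetP [y' hy' ->] nxy.
  apply: (hcl x' y' hx' hy'); apply: contra nxy => /eqP -> //.
move=> x y /imsetP [x' hx' ->] /imsetP [y' hy' ->].
exact: (hst x' y' hx' hy').
Qed.

Lemma KSS a b u v : f a b -> u \in A a b -> v \in A b a -> e u v ->
  (u \in X a b) || (v \in X b a).
Proof.
move=> fab hu hv euv; apply/negPn/negP; rewrite negb_or => /andP[nu nv].
have cu : R <= #|C a b u| by move: nu; rewrite inE hu /= -leqNgt.
have cv : R <= #|C b a v| by move: nv; rewrite inE hv /= -leqNgt.
have [S1 [s1 c1 st1]] := stable_sub cu.
have [S2 [s2 c2 st2]] := stable_sub cv.
have hC1 x : x \in S1 -> (x \in A a b) /\ (forall y, y \notin A a b -> e x y = e u y).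
  move=> /(subsetP s1); rewrite inE => /andP[-> /forallP H]; split => // y hy.
  by apply/eqP; move: (H y); rewrite hy.
have hC2 x : x \in S2 -> (x \in A b a) /\ (forall y, y \notin A b a -> e x y = e v y).
  move=> /(subsetP s2); rewrite inE => /andP[-> /forallP H]; split => // y hy.
  by apply/eqP; move: (H y); rewrite hy.
have nAab y : y \in A b a -> y \notin A a b.
  by rewrite !inA => h; apply/negP => h'; exact: (DISJ fsym firr facyc fab h' h).
have nAba y : y \in A a b -> y \notin A b a.
  by rewrite !inA => h; apply/negP => h'; exact: (DISJ fsym firr facyc fab h h').
apply: noKtt; exists S1, S2; split => //.
  apply/pred0P => x /=; apply/negP => /andP[/hC1 [h1 _] /hC2 [h2 _]].
  by move: (nAba _ h1); rewrite h2.
move=> x y /hC1 [hx ex] /hC2 [hy ey].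
have exv : e x v by rewrite ex // nAab.
by rewrite esym ey ?nAba // esym.
Qed.


Hypothesis fconn : forall i j, connect f i j.

Definition Tv v : {set I} := [set m | [forall a, forall b,
  (f a b && ns f a b (L v) && ns f b a m) ==> (v \in X a b)]].

Lemma TvP v m : reflect (forall a b, f a b -> ns f a b (L v) -> ns f b a m -> v \in X a b)
  (m \in Tv v).
Proof.
rewrite inE; apply: (iffP forallP) => [H a b fab h1 h2 | H a].
  by move: (forallP (H a) b); rewrite fab h1 h2.
by apply/forallP => b; apply/implyP => /andP[/andP[]]; exact: H.
Qed.

Lemma Tv_self v : L v \in Tv v.
Proof. by apply/TvP => a b fab h1 h2; case: (DISJ fsym firr facyc fab h1 h2). Qed.

Lemma uniq_path i j : exists s, [/\ path f i s, last i s = j & uniq (i :: s)].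
Proof.
have /connectP [p pp lp] := fconn i j.
move: lp; case: (shortenP pp) => p' pp' up' _ lp'.
by exists p'.
Qed.

Lemma mem_split (y : I) s : y \in s -> exists q1 q2, s = q1 ++ y :: q2.
Proof. by case/splitPr => q1 q2; exists q1, q2. Qed.

Lemma Tv_path v s : path f (L v) s -> uniq (L v :: s) -> last (L v) s \in Tv v ->
  forall y, y \in L v :: s -> y \in Tv v.
Proof.
move=> ps us hm y /mem_split [q1 [q2 E]].
apply/TvP => a b fab h1 h2.
have [s' [ps' ls' E']] := path_prefix ps E.
rewrite -ls' in h2.
have [r1 [r2 Er]] := PATHSEP fsym firr facyc fab ps' h1 h2.
have Efull : L v :: s = r1 ++ a :: b :: (r2 ++ q2).
  by rewrite E -cat_rcons -E' Er -catA.
have hs : sorted f (L v :: s) := ps.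
rewrite Efull in hs us.
have [_ cR] := CONS fsym hs us.
move/TvP: hm; apply => //; apply: cR; exact: last_in Efull.
Qed.

Lemma CSUB a b c d u : A a b \subset A c d -> C a b u \subset C c d u.
Proof.
move=> sub; apply/subsetP => x; rewrite !inE => /andP[hx /forallP H].
have hx' : x \in A a b by rewrite inA.
apply/andP; split; first by have := subsetP sub _ hx'; rewrite inE.
apply/forallP => y; apply/implyP => hy.
have hy' : y \notin A a b.
  by apply: contra hy => hy; have := subsetP sub _ hy; rewrite inE.
by move: (H y); rewrite hy'.
Qed.

Lemma edge_bag u v : e u v -> exists m, (m \in Tv u) && (m \in Tv v).
Proof.
move=> euv.
have [s [ps ls us]] := uniq_path (L u) (L v).
case: (FIRST (fun a b => u \in X a b) (L u) s) => [H | [q1 [a [b [q2 [E nX H]]]]]].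
  exists (L v); rewrite Tv_self andbT.
  apply/TvP => c d fcd h1 h2; rewrite -ls in h2.
  have [r1 [r2 Er]] := PATHSEP fsym firr facyc fcd ps h1 h2.
  exact: H Er.
exists a; apply/andP; split.
  apply/TvP => c d fcd h1 h2.
  have [s' [ps' ls' E']] := path_prefix ps E.
  rewrite -ls' in h2.
  have [r1 [r2 Er]] := PATHSEP fsym firr facyc fcd ps' h1 h2.
  by apply: (H r1 c d r2); rewrite -E' Er.
apply/TvP => c d fcd h1 h2.
have hsE : sorted f (q1 ++ a :: b :: q2) by rewrite -E.
have usE : uniq (q1 ++ a :: b :: q2) by rewrite -E.
have fab : f a b := pair_rel hsE.
have hs2 : sorted f (a :: b :: q2) by case: (cat_sorted2 hsE).
have Lvl : last a (b :: q2) = L v.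
  by rewrite -ls; have -> : last (L u) s = last (L u) (L u :: s) by []; rewrite E last_cat.
pose w' := rev (belast a (b :: q2)).
have Ew : rev (a :: b :: q2) = L v :: w'.
  by rewrite lastI rev_rcons Lvl.
have pw : path f (L v) w' by have := hs2; rewrite -sorted_rev // Ew.
have lw : last (L v) w' = a.
  have -> : last (L v) w' = last a (L v :: w') by [].
  by rewrite -Ew rev_cons last_rcons.
rewrite -lw in h2.
have [r1 [r2 Er]] := PATHSEP fsym firr facyc fcd pw h1 h2.
have Eab : a :: b :: q2 = rev r2 ++ d :: c :: rev r1.
  by rewrite -[a :: b :: q2]revK Ew Er rev_cat !rev_cons -!cat_rcons.
have Efull : L u :: s = (q1 ++ rev r2) ++ d :: c :: rev r1 by rewrite E Eab catA.
have fdc : f d c by rewrite fsym.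
have hsF : sorted f ((q1 ++ rev r2) ++ d :: c :: rev r1) by rewrite -Efull.
have usF : uniq ((q1 ++ rev r2) ++ d :: c :: rev r1) by rewrite -Efull.
have [consL consR] := CONS fsym hsF usF.
have [consL0 consR0] := CONS fsym hsE usE.
have hudc : u \in A d c by rewrite inA; apply: consL; exact: head_in Efull.
have hvcd : v \in A c d by rewrite inA.
have hua : u \in A a b by rewrite inA; apply: consL0; exact: head_in E.
have hCab : R <= #|C a b u| by move: nX; rewrite inE hua /= -leqNgt.
have MONO : A a b \subset A d c.
  apply/subsetP => y; rewrite !inA /ns => /connectP [p pp lp].
  have subr : subrel (frem (frem f a b) d c) (connect (frem f d c)).
    by move=> x z /andP[/andP[fxz _] h]; apply: connect1; rewrite /= fxz h.
  have nsa : ns f d c a.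
    apply: consL; rewrite rcons_cat mem_cat; apply/orP; right.
    exact: head_in Eab.
  case: (SPLIT d c pp) => [H1 | [z hz [h3 h4]]].
    by rewrite -lp in H1; apply: connect_trans nsa _; exact: (connect_sub subr).
  rewrite -lp in h4.
  case/orP: hz => /eqP ez; subst z; first exact: (connect_sub subr).
  exfalso; apply: (negP (ACYC fsym firr facyc fab)).
  have hcb : c \in b :: q2 := second_in Eab.
  have := consR0 _ hcb; rewrite /ns (eq_connect (@remC _ f b a)) => hbc.
  apply: (connect_trans h3); by rewrite rem_connect_sym.
have hCdc : R <= #|C d c u| by apply: leq_trans hCab (subset_leq_card (CSUB u MONO)).
have nXdc : u \notin X d c by rewrite inE hudc /= -leqNgt.
by have := KSS fdc hudc hvcd euv; rewrite (negbTE nXdc).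
Qed.


Variable k : nat.
Hypotheses (deg3 : forall i, degree f i <= 3)
  (hcut : forall i j, f i j -> cutrank e (edge_side f L i j) <= k).

Definition Bag m := [set v | m \in Tv v].

Lemma BagE v m : (v \in Bag m) = (m \in Tv v).
Proof. by rewrite /Bag inE. Qed.

Lemma X_card a b : f a b -> #|X a b| <= 2 ^ k * (R - 1).
Proof.
move=> fab; apply: leq_trans (count_X e R (A a b)) _.
by rewrite leq_mul2r leq_pexp2l ?hcut ?orbT.
Qed.

Lemma last2 (x : I) s : s != [::] -> exists q1 j, x :: s = q1 ++ [:: j; last x s].
Proof.
elim: s x => [//|y s IH] x _.
case: s IH => [|z s] IH; first by exists [::], x.
have [q1 [j E]] := IH y isT.
by exists (x :: q1), j; rewrite /= E.
Qed.

Lemma Bag_sub m : Bag m \subset [set v | L v == m] :|: \bigcup_(j in [set j | f m j]) X j m.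
Proof.
apply/subsetP => v; rewrite inE => hm.
case E0 : (L v == m); first by rewrite inE inE E0.
have [s [ps ls us]] := uniq_path (L v) m.
have sn : s != [::] by apply/eqP => s0; move: E0 ls; rewrite s0 /= => /eqP.
have [q1 [j E]] := last2 (L v) sn.
rewrite ls in E.
have hsE : sorted f (q1 ++ [:: j, m & [::]]) by rewrite -E.
have usE : uniq (q1 ++ [:: j, m & [::]]) by rewrite -E.
have fjm : f j m := pair_rel hsE.
have [cL cR] := CONS fsym hsE usE.
have hX : v \in X j m.
  move/TvP: hm; apply => //; first by apply: cL; exact: head_in E.
  by apply: cR; rewrite mem_head.
apply/setUP; right; apply/bigcupP; exists j => //; by rewrite inE fsym.
Qed.

Lemma card_bigcup_le (J : {set I}) (F : I -> {set T}) :
  #|\bigcup_(j in J) F j| <= \sum_(j in J) #|F j|.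
Proof.
apply: (big_ind2 (fun (S : {set T}) (n : nat) => #|S| <= n)) => //.
- by rewrite cards0.
- move=> S1 n1 S2 n2 h1 h2; rewrite cardsU; apply: leq_trans (leq_subr _ _) _.
  exact: leq_add.
Qed.

Lemma Bag_card m : #|Bag m| <= 1 + 3 * (2 ^ k * (R - 1)).
Proof.
apply: leq_trans (subset_leq_card (Bag_sub m)) _.
rewrite cardsU; apply: leq_trans (leq_subr _ _) _.
apply: leq_add.
  case: (set_0Vmem [set v | L v == m]) => [-> | [v0 hv0]]; first by rewrite cards0.
  apply: (@leq_trans #|[set v0]|); last by rewrite cards1.
  apply: subset_leq_card; apply/subsetP => v; rewrite !inE => /eqP h.
  by move: hv0; rewrite inE -h => /eqP /Linj ->.
apply: leq_trans (card_bigcup_le _ _) _.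
apply: (@leq_trans (\sum_(j in [set j | f m j]) (2 ^ k * (R - 1)))).
  by apply: leq_sum => j; rewrite inE fsym => /X_card.
rewrite sum_nat_const leq_mul2r; apply/orP; right; exact: deg3.
Qed.

Lemma path_restrict (P : pred I) x s : path f x s -> (forall y, y \in x :: s -> P y) ->
  path [rel a b | [&& f a b, P a & P b]] x s.
Proof.
elim: s x => [//|y s IH] x /= /andP[fxy ps] H.
rewrite fxy H ?mem_head // H /=; last by rewrite !inE eqxx orbT.
apply: IH => // z hz; apply: H; by rewrite inE hz orbT.
Qed.

Lemma Bag_decomp : is_tree f -> is_tree_decomposition e f Bag.
Proof.
move=> ftree; split => //.
- by move=> v; exists (L v); rewrite BagE Tv_self.
- move=> u v /edge_bag [m hm]; exists m; by rewrite !BagE.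
move=> v i j hi hj.
set rr := [rel x y | [&& f x y, v \in Bag x & v \in Bag y]].
have rsym : symmetric rr by move=> x y /=; rewrite fsym; case: (v \in Bag x); case: (v \in Bag y); rewrite ?andbF ?andbT.
have H i0 : v \in Bag i0 -> connect rr (L v) i0.
  rewrite BagE => h.
  have [s [ps ls us]] := uniq_path (L v) i0.
  apply/connectP; exists s => //.
  have := path_restrict (P := fun y => v \in Bag y) ps; apply => y hy.
  rewrite BagE; apply: (Tv_path ps us) => //; rewrite ?ls //.
apply: (connect_trans _ (H j hj)); rewrite (sym_connect_sym rsym); exact: H.
Qed.

End Main.

Lemma tw_triv (T : finType) (e : rel T) : tw_le e (#|T|.-1).
Proof.
exists (unit : finType), [rel _ _ : unit | false], (fun _ => [set: T]); split.
  split.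
  - split.
    + by rewrite card_unit.
    + by [].
    + by [].
    + by move=> [] []; exact: connect0.
    + by move=> [|[] [|[] [|[] s]]].
  - by move=> v; exists tt; rewrite inE.
  - by move=> u v _; exists tt; rewrite !inE.
  - by move=> v [] [] _ _; exact: connect0.
by move=> _; rewrite cardsT leqSpred.
Qed.

Unset Implicit Arguments.
Theorem mainTheorem6 (t : nat) (T : finType) (e : rel T)
  (e_sym : symmetric e) (e_irr : irreflexive e) (t_pos : 0 < t)
  (noKt : ~ has_induced_Kt e t) (noKtt : ~ has_induced_Ktt e t)
  (tw rw R : nat) (htw : treewidth_is e tw) (hrw : rankwidth_is e rw)
  (hR : ramsey_number_is t R) :
  tw <= 3 * (R - 1) * 2 ^ (rw + 1) - 1.
Proof.
case: htw => _ twmin; case: hrw => hrw _; case: hR => hram _.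
case: (posnP #|T|) => [T0 | Tpos].
  by have := twmin _ (tw_triv e); rewrite T0 /= leqn0 => /eqP ->.
have R2 : 1 < R.
  rewrite ltnNge; apply/negP => R1.
  case: (leqP t 1) => t1.
    have /card_gt0P [x _] := Tpos.
    apply: noKt; exists [set x]; split; first by rewrite cards1; lia.
    by move=> y z; rewrite !inE => /eqP -> /eqP ->; rewrite eqxx.
  have rs : symmetric [rel _ _ : unit | false] by [].
  have ri : irreflexive [rel _ _ : unit | false] by [].
  have hU : R <= #|{: unit}| by rewrite card_unit.
  have [S [cS _]] := hram _ _ rs ri hU.
  have := max_card (mem S); rewrite cS card_unit; lia.
case: hrw => [T1 | [I [f [L [[ftree deg3 Linj Lleaf Lall] hcut]]]]].
  apply: leq_trans (twmin _ (tw_triv e)) _.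
  have -> : #|T|.-1 = 0 by lia.
  done.
have ftree' := ftree.
case: ftree' => _ fsym firr fconn facyc.
have D := Bag_decomp e_sym e_irr noKt noKtt hram L fsym firr facyc fconn ftree.
apply: twmin; exists I, f, (Bag e R f L); split => // m.
apply: leq_trans (Bag_card R fsym Linj fconn deg3 hcut m) _.
have hx : 0 < 2 ^ rw * (R - 1) by rewrite muln_gt0 expn_gt0 /=; lia.
rewrite addn1 expnS.
set x := 2 ^ rw * (R - 1) in hx *.
have -> : 3 * (R - 1) * (2 * 2 ^ rw) = 6 * x by rewrite /x; lia.
lia.
Qed.
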